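(* There is an absolute constant $C>0$ such that the following holds. Let $(G,s,t)$ be an oriented parallel superedge on $n$ vertices with principal subgraphs $G_1,\dots,G_k$, each non-parallel. Partition $\{G_1,\dots,G_k\}$ into classes $E_1,\dots,E_\ell$ of mutually oriented-isomorphic subgraphs (two principal subgraphs lie in the same class iff they are oriented-isomorphic), and let $R_i\in E_i$ be a representative with $n_i$ vertices, $1\le i\le\ell$. Then $$\sum_{i=1}^{\ell} n_i\Big[\big|\mathsf{ST}(R_i)/\mathrm{Aut}_{\mathrm{or}}(R_i,s,t)\big|+\big|\mathsf{NT}(R_i)/\mathrm{Aut}_{\mathrm{or}}(R_i,s,t)\big|\Big]\le C\,n\,\big|\mathsf{ST}(G)/\mathrm{Aut}_{\mathrm{or}}(G,s,t)\big|.$$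
   Context: All graphs are finite, simple and undirected. An oriented series-parallel graph is a triple $(G,s,t)$ where $G$ is a graph and $s\neq t$ are vertices, defined recursively: (i) $G$ is a single edge with vertex set $\{s,t\}$; or (ii) (serial superedge) there are $k\ge 2$ oriented series-parallel graphs $(G_1,s_1,t_1),\dots,(G_k,s_k,t_k)$ with $s_1=s$, $t_k=t$, $t_i=s_{i+1}$ for $1\le i<k$, $V(G_i)\cap V(G_{i+1})=\{s_{i+1}\}$, $V(G_i)\cap V(G_j)=\emptyset$ for $|i-j|\ge2$, and $G=G_1\cup\dots\cup G_k$; or (iii) (parallel superedge) there are $k\ge2$ oriented series-parallel graphs $(G_1,s,t),\dots,(G_k,s,t)$ with $V(G_i)\cap V(G_j)=\{s,t\}$ for $i\neq j$ and $G=G_1\cup\dots\cup G_k$. The $G_i$ are the principal subgraphs; a graph is non-parallel if it is not a parallel superedge. $G_a,G_b$ are oriented-isomorphic if there is a graph isomorphism $\tau:G_a\to G_b$ with $\tau(s)=s$, $\tau(t)=t$. $\mathrm{Aut}_{\mathrm{or}}(H,u,v)$ is the group of automorphisms of $H$ fixing $u$ and $v$. $\mathsf{ST}(H)$ is the set of spanning trees of $H$. A near tree of an oriented series-parallel graph $(H,u,v)$ is a spanning forest of $H$ with exactly two connected components, one containing $u$ and the other containing $v$; $\mathsf{NT}(H)$ is the set of near trees. $X/\Gamma$ denotes the set of orbits of $X$ under the group $\Gamma$ (subgraphs $A,B$ in the same orbit iff $A=\sigma(B)$ for some $\sigma\in\Gamma$). *)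

(* Defs.v *)
(* Graphs live inside an ambient finite type V: a graph is a
   vertex set VS : {set V} and an edge set ES : {set {set V}} (each edge a
   2-element subset of VS). *)
From mathcomp Require Import all_boot all_order all_algebra all_fingroup.
From mathcomp Require Import boolp.

Set Implicit Arguments.
Unset Strict Implicit.
Unset Printing Implicit Defensive.

Section SP.
Variable V : finType.

Inductive sp : {set V} -> {set {set V}} -> V -> V -> Prop :=
| sp_edge (s t : V) :
    s != t -> sp [set s; t] [set [set s; t]] s t
| sp_series (k : nat) (Vs : nat -> {set V}) (Es : nat -> {set {set V}})
    (ss ts : nat -> V) (s t : V) :
    2 <= k ->
    (forall i, i < k -> sp (Vs i) (Es i) (ss i) (ts i)) ->
    ss 0 = s -> ts k.-1 = t ->
    (forall i, i.+1 < k -> ts i = ss i.+1) ->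
    (forall i, i.+1 < k -> Vs i :&: Vs i.+1 = [set ss i.+1]) ->
    (forall i j, i < k -> j < k -> i.+2 <= j -> Vs i :&: Vs j = set0) ->
    sp (\bigcup_(i < k) Vs i) (\bigcup_(i < k) Es i) s t
| sp_parallel (k : nat) (Vs : nat -> {set V}) (Es : nat -> {set {set V}})
    (s t : V) :
    2 <= k ->
    (forall i, i < k -> sp (Vs i) (Es i) s t) ->
    (forall i j, i < k -> j < k -> i != j -> Vs i :&: Vs j = [set s; t]) ->
    (forall i j, i < k -> j < k -> i != j -> Es i :&: Es j = set0) ->
    sp (\bigcup_(i < k) Vs i) (\bigcup_(i < k) Es i) s t.

Definition parallel_decomp (VS : {set V}) (ES : {set {set V}}) (s t : V)
    (k : nat) (Vs : nat -> {set V}) (Es : nat -> {set {set V}}) : Prop :=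
  [/\ 2 <= k /\ (forall i, i < k -> sp (Vs i) (Es i) s t),
      (forall i j, i < k -> j < k -> i != j -> Vs i :&: Vs j = [set s; t]),
      (forall i j, i < k -> j < k -> i != j -> Es i :&: Es j = set0),
      VS = \bigcup_(i < k) Vs i &
      ES = \bigcup_(i < k) Es i].

Definition is_parallel (VS : {set V}) (ES : {set {set V}}) (s t : V) : Prop :=
  exists k Vs Es, parallel_decomp VS ES s t k Vs Es.

Definition adj (T : {set {set V}}) : rel V := fun x y => [set x; y] \in T.

(* T contains a cycle (simple graph: at least 3 distinct vertices) *)
Definition has_cycle (T : {set {set V}}) : Prop :=
  exists p : seq V, [/\ uniq p, 3 <= size p & path.cycle (adj T) p].

Definition is_spanning_tree (VS : {set V}) (ES T : {set {set V}}) : Prop :=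
  [/\ T \subset ES,
      (forall x y, x \in VS -> y \in VS -> connect (adj T) x y) &
      ~ has_cycle T].

Definition is_near_tree (VS : {set V}) (ES T : {set {set V}}) (s t : V) : Prop :=
  [/\ T \subset ES, ~ has_cycle T,
      (forall x, x \in VS -> connect (adj T) x s \/ connect (adj T) x t) &
      ~ connect (adj T) s t].

Definition ST (VS : {set V}) (ES : {set {set V}}) : {set {set {set V}}} :=
  [set T | `[< is_spanning_tree VS ES T >]].

Definition NT (VS : {set V}) (ES : {set {set V}}) (s t : V)
  : {set {set {set V}}} :=
  [set T | `[< is_near_tree VS ES T s t >]].

(* Aut_or(H,s,t): permutations of V restricting to automorphisms of H fixing
   s and t (every automorphism of H extends by the identity outside VS). *)
Definition autor (VS : {set V}) (ES : {set {set V}}) (s t : V)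
  : {set {perm V}} :=
  [set g : {perm V} | [&& [set g x | x in VS] == VS, g s == s, g t == t &
     [forall e : {set V}, (e \in ES) == ([set g x | x in e] \in ES)]]].

Definition img (g : {perm V}) (B : {set {set V}}) : {set {set V}} :=
  [set [set g x | x in e] | e : {set V} in B].

Definition orbits (Gam : {set {perm V}}) (X : {set {set {set V}}})
  : {set {set {set {set V}}}} :=
  [set [set img g B | g in Gam] | B in X].

Definition norbits (Gam : {set {perm V}}) (X : {set {set {set V}}}) : nat :=
  #|orbits Gam X|.

Definition or_iso (Va : {set V}) (Ea : {set {set V}}) (Vb : {set V})
    (Eb : {set {set V}}) (s t : V) : Prop :=
  exists f : V -> V,
    [/\ {in Va &, injective f}, [set f x | x in Va] = Vb,
        [set [set f x | x in e] | e : {set V} in Ea] = Eb, f s = s & f t = t].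

End SP.

(* Main.v *)
Require Import Defs.
From mathcomp Require Import all_boot all_order all_algebra all_fingroup.
From mathcomp Require Import boolp.
From mathcomp Require Import zify.
Set Implicit Arguments.
Unset Strict Implicit.
Unset Printing Implicit Defensive.


Section GraphA.
Variable V : finType.
Implicit Types (T F : {set {set V}}) (x y u v : V).

Lemma set2C x y : [set x; y] = [set y; x] :> {set V}.
Proof. by apply/setP=> z; rewrite !inE orbC. Qed.

Lemma adj_sym T : symmetric (adj T).
Proof. by move=> x y; rewrite /adj set2C. Qed.

Lemma connect_symT T x y : connect (adj T) x y = connect (adj T) y x.
Proof. exact: (sym_connect_sym (adj_sym T)). Qed.

Lemma connect_closedP (e : rel V) (D : {set V}) x y :
  (forall a b, a \in D -> e a b -> b \in D) -> x \in D -> connect e x y -> y \in D.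
Proof.
move=> cl xD /connectP[p pth ->]; elim: p x xD pth => //= z p IH x xD /andP[exz pz].
exact: IH (cl _ _ xD exz) pz.
Qed.

Lemma connect_mono T T' x y : T \subset T' -> connect (adj T) x y -> connect (adj T') x y.
Proof.
move=> sub; apply: connect_sub => a b ab; apply: connect1.
by rewrite /adj (subsetP sub).
Qed.

Lemma connect_trans3 T x y z : connect (adj T) x y -> connect (adj T) y z -> connect (adj T) x z.
Proof. exact: connect_trans. Qed.

Lemma img_set2 (g : {perm V}) x y : [set g z | z in [set x; y]] = [set g x; g y].
Proof. by rewrite imsetU1 imset_set1. Qed.

Lemma adj_img (g : {perm V}) T x y : adj T x y -> adj (img g T) (g x) (g y).
Proof. by rewrite /adj /img => h; rewrite -img_set2; apply: imset_f. Qed.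

Lemma connect_img (g : {perm V}) T x y :
  connect (adj T) x y -> connect (adj (img g T)) (g x) (g y).
Proof.
move/connectP=> [p pth ->]; apply/connectP; exists (map g p); last by rewrite last_map.
elim: p x pth => //= z p IH x /andP[h1 h2]; rewrite adj_img //=; exact: IH.
Qed.

Lemma imset_perm_inv (g : {perm V}) (e : {set V}) :
  [set g^-1%g x | x in [set g y | y in e]] = e.
Proof.
rewrite -imset_comp; apply/setP=> z; apply/imsetP/idP.
  by case=> w we ->; rewrite /= permK.
by move=> ze; exists z => //=; rewrite permK.
Qed.

Lemma img_inv (g : {perm V}) T : img g^-1%g (img g T) = T.
Proof.
rewrite /img -imset_comp; apply/setP=> e; apply/imsetP/idP.
  by case=> w we ->; rewrite /= imset_perm_inv.
by move=> ze; exists e => //=; rewrite imset_perm_inv.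
Qed.

Lemma imset_perm_inj (g : {perm V}) : injective (fun e : {set V} => [set g x | x in e]).
Proof. by move=> a b h; rewrite -(imset_perm_inv g a) h imset_perm_inv. Qed.

Lemma img_inj (g : {perm V}) : injective (img g).
Proof. by move=> a b h; rewrite -(img_inv g a) h img_inv. Qed.

Lemma mem_img (g : {perm V}) T (e : {set V}) : ([set g x | x in e] \in img g T) = (e \in T).
Proof.
apply/imsetP/idP; last by move=> h; exists e.
by case=> f fT /imset_perm_inj ->.
Qed.

Lemma img_subset (g : {perm V}) T T' : T \subset T' -> img g T \subset img g T'.
Proof. exact: imsetS. Qed.

Lemma img_setI (g : {perm V}) T T' : img g (T :&: T') = img g T :&: img g T'.
Proof. apply: imsetI => a b _ _; exact: imset_perm_inj. Qed.

Lemma img_mul (g h : {perm V}) T : img (g * h)%g T = img h (img g T).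
Proof.
rewrite /img -imset_comp; apply: eq_imset => e /=; rewrite -imset_comp.
by apply: eq_imset => x; rewrite /= permM.
Qed.

Lemma img1 T : img 1%g T = T.
Proof.
rewrite /img; apply/setP=> e; apply/imsetP/idP.
  case=> f fT ->; suff -> : [set (1%g : {perm V}) x | x in f] = f by [].
  by apply/setP=> z; apply/imsetP/idP => [[w wf ->]|zf]; [rewrite perm1|exists z; rewrite ?perm1].
move=> eT; exists e => //; apply/setP=> z.
by apply/idP/imsetP => [zf|[w wf ->]]; [exists z; rewrite ?perm1|rewrite perm1].
Qed.

Lemma cycle_img (g : {perm V}) T : has_cycle T -> has_cycle (img g T).
Proof.
case=> p [up sz cyc]; exists (map g p); split.
- by rewrite map_inj_uniq //; apply: perm_inj.
- by rewrite size_map.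
have H : forall q b, path (adj T) b q -> path (adj (img g T)) (g b) (map g q).
  elim=> [//|b q IH] c /= /andP[h1 h2]; rewrite adj_img //=; exact: IH.
case: p up sz cyc => [//|a p] _ _ /=; rewrite -map_rcons; exact: H.
Qed.

Lemma cycle_img_iff (g : {perm V}) T : has_cycle (img g T) <-> has_cycle T.
Proof.
split; last exact: cycle_img.
by move/(cycle_img g^-1%g); rewrite img_inv.
Qed.

End GraphA.


Section GraphA2.
Variable V : finType.
Implicit Types (T F : {set {set V}}) (x y u v : V).

Lemma cycle_mono T T' : T \subset T' -> has_cycle T -> has_cycle T'.
Proof.
move=> sub [p [up sz cyc]]; exists p; split => //.
case: p up sz cyc => [//|a p] _ _ /=; apply: sub_path => b c.
by rewrite /adj => h; rewrite (subsetP sub).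
Qed.

Lemma cycle_edge T : has_cycle T ->
  exists x y, [/\ x != y, [set x; y] \in T & connect (adj (T :\ [set x; y])) x y].
Proof.
case=> [[|a [|b [|c q]]]] [up sz] //; set q' := c :: q => cyc.
have : path (adj T) a (rcons (b :: q') a) by [].
rewrite rcons_path /= => /andP[/andP[ab pq] la].
have aq : a \notin b :: q' by case/andP: up.
have bq : b \notin q' by case/and3P: up.
set y := last b q'.
have yq : y \in q' by rewrite /y /q' /= mem_last.
exists a, y; split.
- by apply: contraNneq aq => ->; rewrite inE yq orbT.
- by rewrite set2C.
apply/connectP; exists (b :: q') => //=; apply/andP; split.
  rewrite /adj !inE; move: ab; rewrite /adj => ->; rewrite andbT; apply/negP => /eqP e.
  have : b \in [set a; y] by rewrite -e !inE eqxx orbT.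
  rewrite !inE => /orP[/eqP ba|/eqP hby]; first by move: aq; rewrite ba inE eqxx.
  by move: bq; rewrite hby yq.
have ee' : {in predC1 a &, subrel (adj T) (adj (T :\ [set a; y]))}.
  move=> u w /= ua wa; rewrite /adj !inE => ->; rewrite andbT.
  apply/negP => /eqP e; have : a \in [set u; w] by rewrite e !inE eqxx.
  by rewrite !inE eq_sym (negPf ua) eq_sym (negPf wa).
have pq' : path (adj T) b q' by []. apply: (sub_in_path ee' _ pq').
apply/allP => z zq; apply: contraNneq aq => /= <-; exact: zq.
Qed.

Lemma forest_edge T x y : ~ has_cycle T -> [set x; y] \in T -> x != y ->
  ~~ connect (adj (T :\ [set x; y])) x y.
Proof.
move=> nc exy nxy; apply/negP => /connectP[p pth lp].
move: lp; case: (shortenP pth) => p' pth' up _ lp.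
apply: nc; exists (x :: p'); split => //.
  case: p' pth' up lp => [/= _ _ e|b [|c r] pth' up lp]; first by rewrite e eqxx in nxy.
    simpl in lp; subst y; move: pth'; rewrite /= /adj !inE eqxx; done.
  by [].
have : path (adj T) x (rcons p' x); last by [].
rewrite rcons_path -lp {2}/adj set2C exy andbT.
by apply: sub_path pth' => a b; rewrite /adj inE => /andP[].
Qed.

Lemma edge_removal T x y u w : connect (adj T) u w ->
  [\/ connect (adj (T :\ [set x; y])) u w, connect (adj (T :\ [set x; y])) u x |
      connect (adj (T :\ [set x; y])) u y].
Proof.
move=> cuw.
case: (boolP (connect (adj (T :\ [set x; y])) u x)) => ux; first by constructor 2.
case: (boolP (connect (adj (T :\ [set x; y])) u y)) => uy; first by constructor 3.
constructor 1.
have : w \in [set z | connect (adj (T :\ [set x; y])) u z].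
  apply: (connect_closedP (e := adj T)) cuw; last by rewrite inE connect0.
  move=> a b; rewrite !inE => ua ab.
  case: (boolP ([set a; b] == [set x; y])) => [/eqP e|ne].
    have : a \in [set x; y] by rewrite -e !inE eqxx.
    by rewrite !inE => /orP[/eqP ax|/eqP ay]; [rewrite ax in ua; rewrite ua in ux|rewrite ay in ua; rewrite ua in uy].
  apply: connect_trans ua (connect1 _); by rewrite /adj !inE ne.
by rewrite inE.
Qed.

Lemma st_exists (VS : {set V}) ES :
  (forall x y, x \in VS -> y \in VS -> connect (adj ES) x y) ->
  exists T, is_spanning_tree VS ES T.
Proof.
move=> conn.
suff H : forall n T, #|T| <= n -> T \subset ES ->
    (forall x y, x \in VS -> y \in VS -> connect (adj T) x y) ->
    exists T, is_spanning_tree VS ES T.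
  exact: (H _ ES (leqnn _) (subxx _) conn).
elim=> [|n IH] T.
  rewrite leqn0 cards_eq0 => /eqP -> _ c; exists set0; split; [exact: sub0set|exact: c|].
  case=> [[|a [|b p]]] [_ _] //= cyc.
  have : path (adj set0) a (rcons (b :: p) a) by [].
  by rewrite /= /adj inE.
move=> cT sub c.
case: (pselect (has_cycle T)) => [cyc|nc]; last by exists T.
case: (cycle_edge cyc) => x [y [nxy exy cxy]].
apply: (IH (T :\ [set x; y])).
- by move: cT; rewrite (cardsD1 [set x; y]) exy add1n ltnS.
- by apply: subset_trans sub; apply: subsetDl.
move=> a b aV bV; move: (c a b aV bV); apply: connect_sub => u w uw.
case: (boolP ([set u; w] == [set x; y])) => [/eqP e|ne]; last first.
  by apply: connect1; rewrite /adj !inE ne.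
have : u \in [set x; y] by rewrite -e !inE eqxx.
have : w \in [set x; y] by rewrite -e !inE eqxx orbT.
rewrite !inE => /orP[]/eqP-> /orP[]/eqP->; rewrite ?connect0 //.
by rewrite connect_symT.
Qed.

Lemma nt_exists (VS : {set V}) ES T s t : is_spanning_tree VS ES T ->
  s \in VS -> t \in VS -> s != t -> exists N, is_near_tree VS ES N s t.
Proof.
case=> sub conn nc sV tV nst.
case/connectP: (conn s t sV tV) => p pth lp.
move: lp; case: (shortenP pth) => p' pth' up _ lp; clear pth.
case/lastP: p' pth' up lp => [/= _ _ e|p1 z pth up]; first by rewrite e eqxx in nst.
rewrite last_rcons => zt; subst z.
move: pth; rewrite rcons_path => /andP[pth1 eyt].
set y := last s p1 in eyt.
have tp1 : t \notin s :: p1 by move: up; rewrite -rcons_cons rcons_uniq => /andP[].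
have yt : y != t by apply: contraNneq tp1 => <-; exact: mem_last.
have eT : [set y; t] \in T by [].
set N := T :\ [set y; t].
have sy : connect (adj N) s y.
  apply/connectP; exists p1 => //.
  have ee' : {in predC1 t &, subrel (adj T) (adj N)}.
    move=> u w /= ut wt; rewrite /adj !inE => ->; rewrite andbT.
    apply/negP => /eqP e; have : t \in [set u; w] by rewrite e !inE eqxx orbT.
    by rewrite !inE eq_sym (negPf ut) eq_sym (negPf wt).
  apply: (sub_in_path ee' _ pth1).
  by apply/allP => z zp; apply: contraNneq tp1 => /= <-.
have nyt := forest_edge nc eT yt.
exists N; split.
- by apply: subset_trans sub; apply: subsetDl.
- by move=> cyc; apply: nc; apply: cycle_mono cyc; apply: subsetDl.
- move=> v vV; case: (edge_removal y t (conn v s vV sV)) => h.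
  + by left.
  + by left; apply: connect_trans h _; rewrite connect_symT.
  + by right.
- move=> st; move/negP: nyt; apply.
  by apply: connect_trans st; rewrite connect_symT.
Qed.

End GraphA2.


Definition UU (T : finType) (k : nat) (X : nat -> {set T}) := \bigcup_(i < k) X i.

Lemma mem_UU (T : finType) k (X : nat -> {set T}) e : (e \in UU k X) = [exists i : 'I_k, e \in X i].
Proof.
apply/bigcupP/existsP => [[i _ h]|[i h]]; by exists i.
Qed.

Section Union.
Variable V : finType.
Variables (k : nat) (Vs : nat -> {set V}) (s t : V).
Hypothesis hint : forall i j, i < k -> j < k -> i != j -> Vs i :&: Vs j \subset [set s; t].


Lemma adj_in (F : {set {set V}}) (W : {set V}) a b :
  (forall e, e \in F -> e \subset W) -> adj F a b -> a \in W /\ b \in W.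
Proof.
move=> h ab; have := h _ ab => /subsetP sub.
by split; apply: sub; rewrite !inE eqxx ?orbT.
Qed.

Lemma connect_in (F : {set {set V}}) (W : {set V}) a b :
  (forall e, e \in F -> e \subset W) -> a \in W -> connect (adj F) a b -> b \in W.
Proof.
move=> h aW; apply: connect_closedP aW => u w _ uw; exact: (adj_in h uw).2.
Qed.

Lemma int_st i j a : i < k -> j < k -> i != j -> a \in Vs i -> a \in Vs j -> (a == s) || (a == t).
Proof.
move=> ik jk ij ai aj; have := subsetP (hint ik jk ij) a.
by rewrite !inE ai aj => /(_ isT).
Qed.

Variable F : nat -> {set {set V}}.
Hypothesis hF : forall i, i < k -> forall e, e \in F i -> e \subset Vs i.

Lemma adj_UU a b : adj (UU k F) a b -> exists2 l, l < k & adj (F l) a b /\ (a \in Vs l /\ b \in Vs l).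
Proof.
rewrite /adj mem_UU => /existsP[l h]; exists l => //; split => //.
exact: (adj_in (hF (ltn_ord l)) h).
Qed.

Lemma local_conn j u v : j < k -> u \in Vs j ->
  ~~ connect (adj (F j)) u s -> ~~ connect (adj (F j)) u t ->
  connect (adj (UU k F)) u v -> connect (adj (F j)) u v.
Proof.
move=> jk uj us ut cuv.
have : v \in [set z | connect (adj (F j)) u z]; last by rewrite inE.
apply: (connect_closedP (e := adj (UU k F))) cuv; last by rewrite inE connect0.
move=> a b; rewrite !inE => ua /adj_UU[l lk [ab [al bl]]].
have aj : a \in Vs j by apply: (connect_in (hF jk)) ua.
case: (eqVneq l j) => [lj|lj].
  by subst l; apply: connect_trans ua (connect1 ab).
case/orP: (int_st lk jk lj al aj) => /eqP as_; subst a.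
  by rewrite ua in us.
by rewrite ua in ut.
Qed.

Lemma reach_s v : (forall i, i < k -> ~~ connect (adj (F i)) s t) ->
  connect (adj (UU k F)) s v ->
  v = s \/ exists2 i, i < k & (v \in Vs i /\ connect (adj (F i)) s v).
Proof.
move=> nst csv.
have : v \in [set z | (z == s) || [exists i : 'I_k, (z \in Vs i) && connect (adj (F i)) s z]].
  apply: (connect_closedP (e := adj (UU k F))) csv; last by rewrite inE eqxx.
  move=> a b; rewrite !inE => ha /adj_UU[l lk [ab [al bl]]].
  apply/orP; right.
  have Hs : a = s -> [exists i : 'I_k, (b \in Vs i) && connect (adj (F i)) s b].
    move=> as_; subst a; apply/existsP; exists (Ordinal lk); rewrite /= bl /=.
    exact: connect1.
  case/orP: ha => [/eqP|/existsP[i /andP[ai sa]]]; first exact: Hs.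
  case: (eqVneq (nat_of_ord i) l) => [il|il].
    apply/existsP; exists i; rewrite -il in bl ab; rewrite bl /=.
    exact: connect_trans sa (connect1 ab).
  case/orP: (int_st (ltn_ord i) lk il ai al) => /eqP as_; first exact: Hs.
  by subst a; move: (nst _ (ltn_ord i)); rewrite sa.
rewrite inE => /orP[/eqP -> |/existsP[i /andP[vi svi]]]; first by left.
by right; exists i.
Qed.

End Union.

Section UnionTree.
Variable V : finType.
Variables (k : nat) (Vs : nat -> {set V}) (E : nat -> {set {set V}}) (s t : V).
Hypothesis hint : forall i j, i < k -> j < k -> i != j -> Vs i :&: Vs j \subset [set s; t].
Hypothesis hE : forall i, i < k -> forall e, e \in E i -> e \subset Vs i.
Hypothesis hst : forall i, i < k -> (s \in Vs i) && (t \in Vs i).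

Lemma UU_setD (X : nat -> {set {set V}}) e :
  UU k X :\ e = UU k (fun i => X i :\ e).
Proof.
apply/setP=> f; rewrite !inE !mem_UU; apply/andP/existsP.
  by case=> fe /existsP[i fi]; exists i; rewrite !inE fe.
by case=> i; rewrite !inE => /andP[fe fi]; split => //; apply/existsP; exists i.
Qed.

Lemma union_st (X : nat -> {set {set V}}) j0 : j0 < k ->
  (forall i, i < k -> X i \subset E i) ->
  is_spanning_tree (Vs j0) (E j0) (X j0) ->
  (forall i, i < k -> i != j0 -> is_near_tree (Vs i) (E i) (X i) s t) ->
  is_spanning_tree (UU k Vs) (UU k E) (UU k X).
Proof.
move=> j0k XE stj0 nti.
have Xforest : forall i, i < k -> ~ has_cycle (X i).
  move=> i ik; case: (eqVneq i j0) => [->|ne]; first by case: stj0.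
  by case: (nti i ik ne).
have hX : forall i, i < k -> forall e, e \in X i -> e \subset Vs i.
  by move=> i ik e eX; apply: (hE ik); apply: (subsetP (XE i ik)).
have XU : forall i, i < k -> X i \subset UU k X.
  by move=> i ik; apply/subsetP => e ei; rewrite mem_UU; apply/existsP; exists (Ordinal ik).
have stU : connect (adj (UU k X)) s t.
  case: stj0 => _ c _; apply: (connect_mono (XU _ j0k)).
  by case/andP: (hst j0k) => ??; apply: c.
have toS : forall x, x \in UU k Vs -> connect (adj (UU k X)) x s.
  move=> x; rewrite /UU => /bigcupP[i _ xi].
  have ik := ltn_ord i.
  case: (eqVneq (nat_of_ord i) j0) => [ij|ij].
    case: stj0 => _ c _; apply: (connect_mono (XU _ j0k)); apply: c.
      by rewrite -ij.
    by case/andP: (hst j0k).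
  case: (nti i ik ij) => _ _ /(_ x xi) [h|h] _.
    exact: (connect_mono (XU _ ik)).
  apply: connect_trans (connect_mono (XU _ ik) h) _.
  by rewrite connect_symT.
split.
- apply/subsetP => e; rewrite !mem_UU => /existsP[i ei]; apply/existsP; exists i.
  exact: (subsetP (XE _ (ltn_ord i))).
- move=> x y xU yU; apply: connect_trans (toS _ xU) _; by rewrite connect_symT toS.
move=> /cycle_edge [x [y [nxy exy cxy]]].
move: exy; rewrite mem_UU => /existsP[j exy].
have jk := ltn_ord j.
set Fm := fun i => X i :\ [set x; y].
have hFm : forall i, i < k -> forall e, e \in Fm i -> e \subset Vs i.
  by move=> i ik e; rewrite inE => /andP[_]; apply: hX.
have FmX : forall i, X i \subset X i := fun i => subxx _.
rewrite UU_setD in cxy.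
have nxyj : ~~ connect (adj (Fm j)) x y := forest_edge (Xforest _ jk) exy nxy.
have [xj yj] := adj_in (hX _ jk) exy.
have Fm_sub : forall i, Fm i \subset X i by move=> i; apply: subsetDl.
have reach : forall a b, a \in Vs j -> connect (adj (UU k Fm)) a b -> ~~ connect (adj (Fm j)) a b ->
    connect (adj (Fm j)) a s \/ connect (adj (Fm j)) a t.
  move=> a b aj cab nab.
  case: (boolP (connect (adj (Fm j)) a s)) => [h|h1]; first by left.
  case: (boolP (connect (adj (Fm j)) a t)) => [h|h2]; first by right.
  by rewrite (local_conn hint hFm jk aj h1 h2 cab) in nab.
have cyx : connect (adj (UU k Fm)) y x by rewrite connect_symT.
have nyx : ~~ connect (adj (Fm j)) y x by rewrite connect_symT.
have key : forall a b, a \in Vs j -> b \in Vs j -> connect (adj (Fm j)) a s ->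
    ~~ connect (adj (Fm j)) a b -> connect (adj (UU k Fm)) a b ->
    (forall i, i < k -> ~~ connect (adj (Fm i)) s t) -> False.
  move=> a b aj bj sa nab cab nst.
  have csb : connect (adj (UU k Fm)) s b.
    apply: connect_trans cab; rewrite connect_symT.
    apply: connect_mono sa; apply/subsetP => e ej; rewrite mem_UU; apply/existsP.
    by exists j.
  case: (reach_s hint hFm nst csb) => [bs|[i ik [bi sb]]].
    by subst b; rewrite sa in nab.
  case: (eqVneq i j) => [ij|ij].
    subst i; move/negP: nab; apply; apply: connect_trans sa sb.
  case/orP: (int_st hint ik jk ij bi bj) => /eqP bst; subst b.
    by rewrite sa in nab.
  by move: (nst _ ik); rewrite sb.
have nst_other : forall i, i < k -> i != j0 -> ~~ connect (adj (Fm i)) s t.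
  move=> i ik ij; case: (nti i ik ij) => _ _ _ h; apply/negP => st.
  by apply: h; apply: connect_mono (Fm_sub i) st.
have Hx := reach x y xj cxy nxyj.
have Hy := reach y x yj cyx nyx.
have Fjst : ~~ connect (adj (Fm j)) s t -> forall i, i < k -> ~~ connect (adj (Fm i)) s t.
  move=> h i ik; case: (eqVneq i (nat_of_ord j)) => [->//|ij].
  case: (eqVneq i j0) => [ij0|ij0]; last exact: nst_other.
  move: ij; rewrite eq_sym => ij.
  subst i.
  (* X j connects s and t whenever Fm j separates x,y with x,y on different sides *)
  exfalso.
  have Xjst : connect (adj (X j)) s t.
    have exyX : adj (X j) x y by [].
    case: Hx => [xs|xt].
      case: Hy => [ys|yt].
        by exfalso; move/negP: nxyj; apply; apply: connect_trans xs _; rewrite connect_symT.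
      apply: connect_trans (connect_trans (connect1 exyX) (connect_mono (Fm_sub _) yt)).
      by rewrite connect_symT; apply: connect_mono xs.
    case: Hy => [ys|yt]; last first.
      by exfalso; move/negP: nxyj; apply; apply: connect_trans xt _; rewrite connect_symT.
    rewrite connect_symT.
    apply: connect_trans (connect_trans (connect1 exyX) (connect_mono (Fm_sub _) ys)).
    by rewrite connect_symT; apply: connect_mono xt.
  by case: (nti j jk (ij : j != j0 :> nat)) => _ _ _; apply.
have FjstP : ~~ connect (adj (Fm j)) s t.
  apply/negP => st.
  case: Hx => [xs|xt]; case: Hy => [ys|yt]; move/negP: nxyj; apply.
  - by apply: connect_trans xs _; rewrite connect_symT.
  - by apply: connect_trans (connect_trans xs st) _; rewrite connect_symT.
  - apply: connect_trans xt _; rewrite connect_symT; apply: connect_trans ys st.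
  - by apply: connect_trans xt _; rewrite connect_symT.
have allst := Fjst FjstP.
case: Hx => [xs|xt].
  exact: (key x y xj yj xs nxyj cxy allst).
case: Hy => [ys|yt].
  exact: (key y x yj xj ys nyx cyx allst).
move/negP: nxyj; apply; apply: connect_trans xt _; by rewrite connect_symT.
Qed.

End UnionTree.


Section SPInv.
Variable V : finType.
Implicit Types (ES : {set {set V}}) (VS : {set V}) (s t : V).

Definition link ES s t : rel {set V} := fun e f =>
  [&& e \in ES, f \in ES & [exists v, [&& v \in e, v \in f, v != s & v != t]]].

Record spinv VS ES s t : Prop := SpInv {
  i_st : s != t; i_s : s \in VS; i_t : t \in VS;
  i_e2 : forall e, e \in ES -> exists x y, x != y /\ e = [set x; y];
  i_esub : forall e, e \in ES -> e \subset VS;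
  i_cov : forall v, v \in VS -> exists2 e, e \in ES & v \in e;
  i_conn : forall x y, x \in VS -> y \in VS -> connect (adj ES) x y;
  i_ls : forall e, e \in ES -> exists2 f, f \in ES & (s \in f) && connect (link ES s t) e f;
  i_lt : forall e, e \in ES -> exists2 f, f \in ES & (t \in f) && connect (link ES s t) e f }.

Lemma link_sym ES s t : symmetric (link ES s t).
Proof.
move=> e f; rewrite /link andbCA; congr (_ && (_ && _)).
by apply/existsP/existsP => -[v]; rewrite andbCA => h; exists v.
Qed.

Lemma connect_link_sym ES s t e f :
  connect (link ES s t) e f = connect (link ES s t) f e.
Proof. exact: (sym_connect_sym (link_sym ES s t)). Qed.

Lemma link_sub VS ES ES' a b s t :
  ES \subset ES' -> (forall e, e \in ES -> e \subset VS) ->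
  (forall v, v \in VS -> v != a -> v != b -> (v != s) && (v != t)) ->
  forall e f, connect (link ES a b) e f -> connect (link ES' s t) e f.
Proof.
move=> sub esub hv; apply: connect_sub => e f /and3P[eE fE /existsP[v /and4P[ve vf va vb]]].
apply: connect1; rewrite /link !(subsetP sub) //=; apply/existsP; exists v.
by rewrite ve vf /= hv // (subsetP (esub _ eE)).
Qed.

Lemma link1 ES s t e f v : e \in ES -> f \in ES -> v \in e -> v \in f -> v != s -> v != t ->
  connect (link ES s t) e f.
Proof.
move=> eE fE ve vf vs vt; apply: connect1; rewrite /link eE fE /=.
by apply/existsP; exists v; rewrite ve vf vs vt.
Qed.

Lemma subset_UU (T : finType) k (X : nat -> {set T}) i : i < k -> X i \subset UU k X.
Proof. by move=> ik; apply/subsetP => e ei; rewrite mem_UU; apply/existsP; exists (Ordinal ik). Qed.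

Lemma spinv_edge s t : s != t -> spinv [set s; t] [set [set s; t]] s t.
Proof.
move=> st; split; first by [].
- by rewrite !inE eqxx.
- by rewrite !inE eqxx orbT.
- by move=> e /set1P ->; exists s, t.
- by move=> e /set1P ->.
- by move=> v vV; exists [set s; t] => //; rewrite inE.
- have h1 : connect (adj [set [set s; t]]) s t by apply: connect1; rewrite /adj inE.
  have h2 : connect (adj [set [set s; t]]) t s by rewrite connect_symT.
  move=> x y; rewrite !inE => /orP[]/eqP-> /orP[]/eqP->; by rewrite ?connect0.
- by move=> e /set1P ->; exists [set s; t]; rewrite ?inE ?eqxx ?connect0.
- by move=> e /set1P ->; exists [set s; t]; rewrite ?inE ?eqxx ?orbT ?connect0.
Qed.

Lemma spinv_parallel k (Vs : nat -> {set V}) (Es : nat -> {set {set V}}) s t :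
  1 <= k -> (forall i, i < k -> spinv (Vs i) (Es i) s t) ->
  spinv (UU k Vs) (UU k Es) s t.
Proof.
move=> k1 inv.
have I0 := inv 0 k1.
split.
- exact: i_st I0.
- exact: (subsetP (subset_UU Vs k1) _ (i_s I0)).
- exact: (subsetP (subset_UU Vs k1) _ (i_t I0)).
- by move=> e; rewrite mem_UU => /existsP[i ei]; apply: (i_e2 (inv i (ltn_ord i))).
- move=> e; rewrite mem_UU => /existsP[i ei]; apply: subset_trans (subset_UU Vs (ltn_ord i)).
  exact: (i_esub (inv i (ltn_ord i))).
- move=> v; rewrite mem_UU => /existsP[i vi]; case: (i_cov (inv i (ltn_ord i)) vi) => e ei ve.
  by exists e => //; rewrite mem_UU; apply/existsP; exists i.
- have toS : forall x, x \in UU k Vs -> connect (adj (UU k Es)) x s.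
    move=> x; rewrite mem_UU => /existsP[i xi]; have Ii := inv i (ltn_ord i).
    apply: (connect_mono (subset_UU Es (ltn_ord i))); apply: (i_conn Ii) => //; exact: i_s Ii.
  by move=> x y xV yV; apply: connect_trans (toS x xV) _; rewrite connect_symT toS.
- move=> e; rewrite mem_UU => /existsP[i ei]; have Ii := inv i (ltn_ord i).
  case: (i_ls Ii ei) => f fE /andP[sf cef]; exists f.
    exact: (subsetP (subset_UU Es (ltn_ord i))).
  rewrite sf /=; apply: (link_sub (subset_UU Es (ltn_ord i)) (i_esub Ii)) cef.
  by move=> v _ -> ->.
- move=> e; rewrite mem_UU => /existsP[i ei]; have Ii := inv i (ltn_ord i).
  case: (i_lt Ii ei) => f fE /andP[sf cef]; exists f.
    exact: (subsetP (subset_UU Es (ltn_ord i))).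
  rewrite sf /=; apply: (link_sub (subset_UU Es (ltn_ord i)) (i_esub Ii)) cef.
  by move=> v _ -> ->.
Qed.

End SPInv.


Section Series.
Variable V : finType.
Variables (k : nat) (Vs : nat -> {set V}) (Es : nat -> {set {set V}}) (ss ts : nat -> V) (s t : V).
Hypothesis hk : 2 <= k.
Hypothesis inv : forall i, i < k -> spinv (Vs i) (Es i) (ss i) (ts i).
Hypothesis h0 : ss 0 = s.
Hypothesis hk1 : ts k.-1 = t.
Hypothesis hj : forall i, i.+1 < k -> ts i = ss i.+1.
Hypothesis hadj : forall i, i.+1 < k -> Vs i :&: Vs i.+1 = [set ss i.+1].
Hypothesis hdis : forall i j, i < k -> j < k -> i.+2 <= j -> Vs i :&: Vs j = set0.

Lemma inter_near i j v : i < j -> j < k -> v \in Vs i -> v \in Vs j -> j = i.+1 /\ v = ss j.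
Proof.
move=> ij jk vi vj.
have ik : i < k by lia.
case: (leqP i.+2 j) => h.
  by have := hdis ik jk h => /setP/(_ v); rewrite !inE vi vj.
have e : j = i.+1 by lia.
subst j; split => //.
by have := hadj jk => /setP/(_ v); rewrite !inE vi vj => /esym/eqP.
Qed.

Lemma s_in i : i < k -> s \in Vs i -> i = 0.
Proof.
move=> ik si; case: (posnP i) => // ip.
have s0 : s \in Vs 0 by rewrite -h0; exact: i_s (inv (ltnW (leq_trans _ hk))).
case: (inter_near ip ik s0 si) => i1 e; subst i.
have := i_st (inv (ltnW hk)); rewrite h0 hj // e eqxx //.
Qed.

Lemma t_in i : i < k -> t \in Vs i -> i = k.-1.
Proof.
move=> ik ti; case: (eqVneq i k.-1) => // ne.
have k1k : k.-1 < k by lia.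
have tk : t \in Vs k.-1 by rewrite -hk1; exact: i_t (inv k1k).
have ilt : i < k.-1 by lia.
case: (inter_near ilt k1k ti tk) => e1 e2.
have := i_st (inv k1k); by rewrite hk1 e2 eqxx.
Qed.

Lemma junction i : 0 < i -> i < k -> (ss i != s) && (ss i != t).
Proof.
move=> ip ik; apply/andP; split.
  apply/negP => /eqP e; have := s_in ik; rewrite -e (i_s (inv ik)) => /(_ isT) i0.
  by rewrite i0 in ip.
apply/negP => /eqP e.
have i1k : i.-1 < k by lia.
have : t \in Vs i.-1 by rewrite -e -(prednK ip) -hj ?prednK //; exact: i_t (inv i1k).
move/(t_in i1k) => h; lia.
Qed.

Lemma piece_v i v : i < k -> v \in Vs i -> v != ss i -> v != ts i -> (v != s) && (v != t).
Proof.
move=> ik vi vs vt; apply/andP; split.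
  apply/negP => /eqP e; subst v; have := s_in ik vi => i0; subst i.
  by rewrite h0 eqxx in vs.
apply/negP => /eqP e; subst v; have := t_in ik vi => i0; subst i.
by rewrite hk1 eqxx in vt.
Qed.

Let ES := UU k Es.

Lemma piece_link i e f : i < k -> connect (link (Es i) (ss i) (ts i)) e f ->
  connect (link ES s t) e f.
Proof.
move=> ik; apply: (link_sub (subset_UU Es ik) (i_esub (inv ik))).
move=> v vi; exact: piece_v.
Qed.

Lemma chain : exists2 fs, fs \in ES /\ fs \in Es 0 &
  forall i, i < k -> forall e, e \in Es i -> connect (link ES s t) e fs.
Proof.
have k0 : 0 < k by lia.
have k1 : 1 < k by lia.
have I0 := inv k0.
case: (i_cov I0 (i_t I0)) => fs fsE tfs.
have fsES : fs \in ES by apply: (subsetP (subset_UU Es k0)).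
have J0 : (ts 0 != s) && (ts 0 != t) by rewrite hj //; apply: junction.
exists fs => //.
elim=> [|i IH] ik e ei.
  case: (i_lt I0 ei) => f fE /andP[tf cef].
  apply: connect_trans (piece_link k0 cef) _.
  case/andP: J0 => J1 J2.
  by apply: (link1 _ _ tf tfs J1 J2); apply: (subsetP (subset_UU Es k0)).
have Ii := inv ik.
have ik' : i < k by lia.
case: (i_ls Ii ei) => f fE /andP[sf cef].
apply: connect_trans (piece_link ik cef) _.
have Ii' := inv ik'.
case: (i_cov Ii' (i_t Ii')) => g gE tg.
apply: connect_trans (IH ik' g gE).
case/andP: (junction (ltn0Sn i) ik) => J1 J2.
apply: (link1 (v := ss i.+1)) => //.
- exact: (subsetP (subset_UU Es ik)).
- exact: (subsetP (subset_UU Es ik')).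
- by rewrite -hj.
Qed.

Lemma spinv_series : spinv (UU k Vs) ES s t /\
  (forall e f, e \in ES -> f \in ES -> connect (link ES s t) e f).
Proof.
have k0 : 0 < k by lia.
have k1k : k.-1 < k by lia.
case: chain => fs [fsE fs0] ch.
have allc : forall e f, e \in ES -> f \in ES -> connect (link ES s t) e f.
  move=> e f; rewrite !mem_UU => /existsP[i ei] /existsP[j fj].
  apply: connect_trans (ch _ (ltn_ord i) _ ei) _.
  by rewrite connect_link_sym; apply: ch (ltn_ord j) _ fj.
split => //.
have I0 := inv k0.
have Ik := inv k1k.
split.
- apply/negP => /eqP e.
  have := t_in k0; rewrite -e -h0 (i_s I0) => /(_ isT) h; lia.
- by rewrite -h0; apply: (subsetP (subset_UU Vs k0)); exact: i_s I0.
- by rewrite -hk1; apply: (subsetP (subset_UU Vs k1k)); exact: i_t Ik.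
- by move=> e; rewrite mem_UU => /existsP[i ei]; apply: (i_e2 (inv (ltn_ord i))).
- move=> e; rewrite mem_UU => /existsP[i ei]; apply: subset_trans (subset_UU Vs (ltn_ord i)).
  exact: (i_esub (inv (ltn_ord i))).
- move=> v; rewrite mem_UU => /existsP[i vi]; case: (i_cov (inv (ltn_ord i)) vi) => e ei ve.
  by exists e => //; rewrite mem_UU; apply/existsP; exists i.
- have toS : forall i, i < k -> connect (adj ES) (ss i) s.
    elim=> [|i IH] ik; first by rewrite h0 connect0.
    have ik' : i < k by lia.
    apply: connect_trans _ (IH ik').
    rewrite -hj // connect_symT; apply: (connect_mono (subset_UU Es ik')).
    by apply: (i_conn (inv ik')); [exact: i_s (inv ik')|exact: i_t (inv ik')].
  have toS' : forall x, x \in UU k Vs -> connect (adj ES) x s.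
    move=> x; rewrite mem_UU => /existsP[i xi]; have Ii := inv (ltn_ord i).
    apply: connect_trans _ (toS _ (ltn_ord i)).
    apply: (connect_mono (subset_UU Es (ltn_ord i))); apply: (i_conn Ii) => //; exact: i_s Ii.
  by move=> x y xV yV; apply: connect_trans (toS' x xV) _; rewrite connect_symT toS'.
- move=> e eE; case: (i_ls I0 fs0) => f fE /andP[sf cf].
  exists f; first exact: (subsetP (subset_UU Es k0)).
  rewrite h0 in sf; rewrite sf /=; apply: connect_trans (allc _ _ eE fsE) _.
  exact: (piece_link k0).
- move=> e eE; case: (i_cov Ik (i_t Ik)) => f fE tf.
  have fES : f \in ES by exact: (subsetP (subset_UU Es k1k)).
  by exists f => //; rewrite hk1 in tf; rewrite tf /=; apply: allc.
Qed.

End Series.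


Section SPI.
Variable V : finType.

Lemma sp_inv (VS : {set V}) ES s t : sp VS ES s t -> spinv VS ES s t.
Proof.
elim=> {VS ES s t}.
- by move=> s t st; apply: spinv_edge.
- move=> k Vs Es ss ts s t hk _ IH h0 hk1 hj hadj hdis.
  by case: (spinv_series hk IH h0 hk1 hj hadj hdis).
- move=> k Vs Es s t hk _ IH _ _.
  by apply: (spinv_parallel (k := k)) => //; lia.
Qed.

Lemma nonpar_linked (VS : {set V}) ES s t : sp VS ES s t -> ~ is_parallel VS ES s t ->
  forall e f, e \in ES -> f \in ES -> connect (link ES s t) e f.
Proof.
case=> {VS ES s t}.
- by move=> s t st _ e f /set1P -> /set1P ->; apply: connect0.
- move=> k Vs Es ss ts s t hk H h0 hk1 hj hadj hdis _.
  have IH := fun i (ik : i < k) => sp_inv (H i ik).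
  by case: (spinv_series hk IH h0 hk1 hj hadj hdis).
- move=> k Vs Es s t hk H hV hE np; exfalso; apply: np.
  by exists k, Vs, Es; split.
Qed.

End SPI.


Section Aut.
Variable V : finType.
Implicit Types (ES Ea Eb N T : {set {set V}}) (VS Va Vb : {set V}) (s t : V) (g h p : {perm V}).

Lemma connect_closedT (T : finType) (e : rel T) (D : {set T}) x y :
  (forall a b, a \in D -> e a b -> b \in D) -> x \in D -> connect e x y -> y \in D.
Proof.
move=> cl xD /connectP[p pth ->]; elim: p x xD pth => //= z p IH x xD /andP[exz pz].
exact: IH (cl _ _ xD exz) pz.
Qed.

Lemma imset_permK g (A : {set V}) : [set g x | x in [set g^-1%g y | y in A]] = A.
Proof. by have := imset_perm_inv g^-1%g A; rewrite invgK. Qed.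

Lemma img_permK g ES : img g (img g^-1%g ES) = ES.
Proof. by have := img_inv g^-1%g ES; rewrite invgK. Qed.

Lemma autorP VS ES s t g : reflect
  [/\ [set g x | x in VS] = VS, g s = s, g t = t &
      forall e, (e \in ES) = ([set g x | x in e] \in ES)]
  (g \in autor VS ES s t).
Proof.
rewrite /autor inE; apply: (iffP and4P) => [[/eqP h1 /eqP h2 /eqP h3 /forallP h4]|[h1 h2 h3 h4]].
  by split => // e; apply/eqP; exact: h4.
by split; rewrite ?h1 ?h2 ?h3 //; apply/forallP => e; rewrite h4.
Qed.

Lemma autor_img VS ES s t g : g \in autor VS ES s t -> img g ES = ES.
Proof.
case/autorP=> _ _ _ h; apply/eqP; rewrite eqEcard; apply/andP; split.
  by apply/subsetP => f /imsetP[e eE ->]; rewrite -h.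
by rewrite card_in_imset //; move=> a b _ _; apply: imset_perm_inj.
Qed.

Lemma autor_of VS ES s t h : [set h x | x in VS] = VS -> h s = s -> h t = t ->
  img h ES = ES -> h \in autor VS ES s t.
Proof.
move=> h1 h2 h3 h4; apply/autorP; split => // e.
by rewrite -{2}h4 mem_img.
Qed.

Lemma autor1 VS ES s t : 1%g \in autor VS ES s t.
Proof.
apply: autor_of; rewrite ?perm1 ?img1 //.
by apply/setP => z; apply/imsetP/idP => [[w wf ->]|zf]; [rewrite perm1|exists z; rewrite ?perm1].
Qed.

Lemma autorV VS ES s t g : g \in autor VS ES s t -> g^-1%g \in autor VS ES s t.
Proof.
move=> gA; have [h1 h2 h3 _] := autorP _ _ _ _ _ gA.
apply: autor_of.
- by rewrite -{1}h1 imset_perm_inv.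
- by rewrite -{1}h2 permK.
- by rewrite -{1}h3 permK.
by rewrite -{1}(autor_img gA) img_inv.
Qed.

Lemma autorM VS ES s t g h : g \in autor VS ES s t -> h \in autor VS ES s t ->
  (g * h)%g \in autor VS ES s t.
Proof.
move=> gA hA; have [g1 g2 g3 _] := autorP _ _ _ _ _ gA; have [h1 h2 h3 _] := autorP _ _ _ _ _ hA.
apply: autor_of; rewrite ?permM ?g2 ?g3 ?h2 ?h3 //.
- rewrite -[RHS]h1 -{2}g1 -imset_comp; apply: eq_imset => x; by rewrite permM.
by rewrite img_mul (autor_img gA) (autor_img hA).
Qed.

Lemma perm_ext (A B : {set V}) (f : V -> V) :
  {in A &, injective f} -> [set f x | x in A] = B ->
  exists p : {perm V}, forall x, x \in A -> p x = f x.
Proof.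
move=> finj fAB.
have cA : #|A| = #|B| by rewrite -fAB card_in_imset.
have cAB : #|~: A| = #|~: B|.
  by apply/eqP; rewrite -(eqn_add2l #|A|) cardsC {1}cA cardsC.
set eA := enum (~: A); set eB := enum (~: B).
have szA : size eA = #|~: A| by rewrite /eA -cardE.
have szB : size eB = #|~: B| by rewrite /eB -cardE.
pose h x := if x \in A then f x else nth x eB (index x eA).
have hB : forall x, x \notin A -> h x \in ~: B.
  move=> x xA; rewrite /h (negPf xA) /eB; rewrite -mem_enum; apply: mem_nth.
  by rewrite szB -cAB -szA index_mem mem_enum inE.
have hA : forall x, x \in A -> h x \in B.
  by move=> x xA; rewrite /h xA -fAB; apply: imset_f.
have hinj : injective h.
  move=> x y.
  case: (boolP (x \in A)) => xA; case: (boolP (y \in A)) => yA.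
  - by rewrite /h xA yA; apply: finj.
  - move=> e; have := hA x xA; rewrite e => hyB.
    by have := hB y yA; rewrite inE hyB.
  - move=> e; have := hA y yA; rewrite -e => hxB.
    by have := hB x xA; rewrite inE hxB.
  rewrite /h (negPf xA) (negPf yA) => /eqP.
  have xe : x \in eA by rewrite mem_enum inE.
  have ye : y \in eA by rewrite mem_enum inE.
  have ix : index x eA < size eB by rewrite szB -cAB -szA index_mem.
  have iy : index y eA < size eB by rewrite szB -cAB -szA index_mem.
  rewrite (set_nth_default y) // nth_uniq ?enum_uniq // => /eqP.
  exact: index_inj.
exists (perm hinj) => x xA; by rewrite permE /h xA.
Qed.

Lemma imset_eq_in (f1 f2 : V -> V) (A : {set V}) :
  {in A, f1 =1 f2} -> [set f1 x | x in A] = [set f2 x | x in A].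
Proof.
move=> h; apply/setP => z; apply/imsetP/imsetP => -[w wA ->]; exists w => //; by rewrite h.
Qed.

Lemma iso_perm Va Ea Vb Eb s t : or_iso Va Ea Vb Eb s t ->
  (forall e, e \in Ea -> e \subset Va) -> s \in Va -> t \in Va ->
  exists p : {perm V}, [/\ [set p x | x in Va] = Vb, img p Ea = Eb, p s = s & p t = t].
Proof.
case=> f [finj fV fE fs ft] esub sV tV.
case: (perm_ext finj fV) => p hp.
exists p; split.
- by rewrite -fV; apply: imset_eq_in.
- rewrite -fE /img; apply: eq_in_imset => e eE /=; apply: imset_eq_in => x xe.
  by apply: hp; apply: (subsetP (esub _ eE)).
- by rewrite hp.
- by rewrite hp.
Qed.

Lemma inST VS ES T : (T \in ST VS ES) <-> is_spanning_tree VS ES T.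
Proof. by rewrite inE; split => /asboolP. Qed.

Lemma inNT VS ES T s t : (T \in NT VS ES s t) <-> is_near_tree VS ES T s t.
Proof. by rewrite inE; split => /asboolP. Qed.

Lemma nt_transport Va Ea Vb Eb s t p N :
  [set p x | x in Va] = Vb -> img p Ea = Eb -> p s = s -> p t = t ->
  is_near_tree Va Ea N s t -> is_near_tree Vb Eb (img p N) s t.
Proof.
move=> pV pE ps pt [sub nc cov nst]; split.
- by rewrite -pE; apply: imsetS.
- by move/cycle_img_iff.
- move=> x; rewrite -pV => /imsetP[y yV ->].
  by case: (cov y yV) => h; [left; rewrite -ps|right; rewrite -pt]; apply: connect_img.
move=> c; apply: nst.
have := connect_img p^-1%g c; rewrite img_inv.
by rewrite -{1}ps -{1}pt !permK.
Qed.

Lemma connect_img_inv g T x y : g x = x -> g y = y ->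
  connect (adj (img g T)) x y -> connect (adj T) x y.
Proof.
move=> gx gy c; have := connect_img g^-1%g c; rewrite img_inv.
by rewrite -{1}gx -{1}gy !permK.
Qed.

End Aut.


Section Struct.
Variable V : finType.
Variables (k : nat) (Vs : nat -> {set V}) (Es : nat -> {set {set V}}) (s t : V).
Hypothesis hsp : forall i, i < k -> sp (Vs i) (Es i) s t.
Hypothesis hnp : forall i, i < k -> ~ is_parallel (Vs i) (Es i) s t.
Hypothesis hV : forall i j, i < k -> j < k -> i != j -> Vs i :&: Vs j = [set s; t].
Hypothesis hE : forall i j, i < k -> j < k -> i != j -> Es i :&: Es j = set0.

Let VS := UU k Vs.
Let ES := UU k Es.

Lemma inv_i i : i < k -> spinv (Vs i) (Es i) s t.
Proof. by move=> ik; apply: sp_inv; apply: hsp. Qed.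

Lemma edge_ex r : r < k -> exists f, f \in Es r.
Proof. by move=> rk; case: (i_cov (inv_i rk) (i_s (inv_i rk))) => f fE _; exists f. Qed.

Lemma into g r : g \in autor VS ES s t -> r < k ->
  exists2 j, j < k & forall e, e \in Es r -> [set g x | x in e] \in Es j.
Proof.
move=> gA rk; have [g1 g2 g3 g4] := autorP _ _ _ _ _ gA.
case: (edge_ex rk) => f0 f0E.
have : [set g x | x in f0] \in ES by rewrite -g4; apply: (subsetP (subset_UU Es rk)).
rewrite mem_UU => /existsP[j gf0]; exists j => //.
move=> e eE.
have : e \in [set e1 : {set V} | [set g x | x in e1] \in Es j]; last by rewrite inE.
apply: (connect_closedT (e := link (Es r) s t)) (nonpar_linked (hsp rk) (hnp rk) f0E eE); last by rewrite inE.
move=> a b; rewrite !inE => ga /and3P[aE bE /existsP[v /and4P[va vb vs vt]]].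
have : [set g x | x in b] \in ES by rewrite -g4; apply: (subsetP (subset_UU Es rk)).
rewrite mem_UU => /existsP[l gb].
case: (eqVneq (nat_of_ord l) (nat_of_ord j)) => [elj|ne]; first by rewrite -elj.
have gvj : g v \in Vs j.
  apply: (subsetP (i_esub (inv_i (ltn_ord j)) ga)); exact: imset_f.
have gvl : g v \in Vs l.
  apply: (subsetP (i_esub (inv_i (ltn_ord l)) gb)); exact: imset_f.
have := hV (ltn_ord l) (ltn_ord j) ne => /setP/(_ (g v)); rewrite !inE gvj gvl /=.
move=> /esym/orP[/eqP h|/eqP h].
  by move: vs; rewrite -g2 in h; rewrite (perm_inj h) eqxx.
by move: vt; rewrite -g3 in h; rewrite (perm_inj h) eqxx.
Qed.

Lemma struct g r : g \in autor VS ES s t -> r < k ->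
  exists2 j, j < k & img g (Es r) = Es j /\ [set g x | x in Vs r] = Vs j.
Proof.
move=> gA rk.
case: (into gA rk) => j jk gj.
case: (into (autorV gA) jk) => j' j'k gj'.
case: (edge_ex rk) => f0 f0E.
have f0j' : f0 \in Es j' by rewrite -(imset_perm_inv g f0); apply: gj'; apply: gj.
have jr : j' = r.
  apply/eqP; apply/negP => /negP ne.
  by have := hE j'k rk ne => /setP/(_ f0); rewrite !inE f0j' f0E.
subst j'.
have imgE : img g (Es r) = Es j.
  apply/setP => f; apply/imsetP/idP => [[e eE ->]|fE]; first exact: gj.
  by exists [set g^-1%g x | x in f]; [apply: gj'|rewrite imset_permK].
exists j => //; split => //.
have Ir := inv_i rk; have Ij := inv_i jk.
apply/setP => y; apply/imsetP/idP => [[x xV ->]|yV].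
  case: (i_cov Ir xV) => e eE xe.
  apply: (subsetP (i_esub Ij (gj _ eE))); exact: imset_f.
case: (i_cov Ij yV) => f fE yf.
move: fE; rewrite -imgE => /imsetP[e eE fe]; subst f.
case/imsetP: yf => x xe ->; exists x => //.
exact: (subsetP (i_esub Ir eE)).
Qed.

End Struct.


Lemma card_fiber (A B C : finType) (D : {set A}) (f1 : A -> B) (f2 : A -> C) :
  {in D &, forall x y, f2 x = f2 y -> f1 x = f1 y} -> #|f1 @: D| <= #|f2 @: D|.
Proof.
move=> h; case: (set_0Vmem D) => [->|[x0 x0D]]; first by rewrite imset0 cards0.
pose phi c := if [pick x in D | f2 x == c] is Some x then f1 x else f1 x0.
have sub : f1 @: D \subset phi @: (f2 @: D).
  apply/subsetP => b /imsetP[x xD ->]; apply/imsetP; exists (f2 x); first exact: imset_f.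
  rewrite /phi; case: pickP => [y /andP[yD /eqP e]|/(_ x)]; first by apply: h.
  by rewrite xD eqxx.
apply: leq_trans (subset_leq_card sub) _; exact: leq_imset_card.
Qed.

Section Orb.
Variable V : finType.

Definition orb (G : {set {perm V}}) (B : {set {set V}}) : {set {set {set V}}} :=
  [set img g B | g in G].

Lemma orb_img (G : {set {perm V}}) B h :
  (forall g1 g2, g1 \in G -> g2 \in G -> (g1 * g2)%g \in G) ->
  (forall g, g \in G -> g^-1%g \in G) -> h \in G -> orb G (img h B) = orb G B.
Proof.
move=> hM hV hG; apply/setP => C; apply/imsetP/imsetP => -[g gG ->].
  by exists (h * g)%g; [apply: hM|rewrite img_mul].
exists (h^-1 * g)%g; [apply: hM => //; exact: hV|].
by rewrite img_mul img_inv.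
Qed.

Lemma orbit_le (G G' : {set {perm V}}) (X Y : {set {set {set V}}}) (psi : {set {set V}} -> {set {set V}}) :
  1%g \in G' ->
  (forall g1 g2, g1 \in G -> g2 \in G -> (g1 * g2)%g \in G) ->
  (forall g, g \in G -> g^-1%g \in G) ->
  (forall B, B \in X -> psi B \in Y) ->
  (forall B1 B2 g, B1 \in X -> B2 \in X -> g \in G' -> psi B2 = img g (psi B1) ->
      exists2 h, h \in G & B2 = img h B1) ->
  norbits G X <= norbits G' Y.
Proof.
move=> h1 hM hV hY hinj.
rewrite /norbits /orbits.
have -> : [set [set img g B | g in G] | B in X] = orb G @: X by [].
have -> : [set [set img g B | g in G'] | B in Y] = orb G' @: Y by [].
apply: (@leq_trans #|(fun B => orb G' (psi B)) @: X|).
  apply: card_fiber => B1 B2 B1X B2X e.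
  have : psi B2 \in orb G' (psi B2) by apply/imsetP; exists 1%g => //; rewrite img1.
  rewrite -e => /imsetP[g gG' pe].
  case: (hinj B1 B2 g B1X B2X gG' pe) => h hG ->.
  by rewrite orb_img.
apply: subset_leq_card; apply/subsetP => O /imsetP[B BX ->].
apply: imset_f; exact: hY.
Qed.

End Orb.


Section Main.
Variable V : finType.
Variables (k : nat) (Vs : nat -> {set V}) (Es : nat -> {set {set V}}) (s t : V).
Hypothesis hk : 2 <= k.
Hypothesis hsp : forall i, i < k -> sp (Vs i) (Es i) s t.
Hypothesis hnp : forall i, i < k -> ~ is_parallel (Vs i) (Es i) s t.
Hypothesis hV : forall i j, i < k -> j < k -> i != j -> Vs i :&: Vs j = [set s; t].
Hypothesis hE : forall i j, i < k -> j < k -> i != j -> Es i :&: Es j = set0.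

Let VS := UU k Vs.
Let ES := UU k Es.
Let A := autor VS ES s t.

Lemma hint' i j : i < k -> j < k -> i != j -> Vs i :&: Vs j \subset [set s; t].
Proof. by move=> ik jk ij; rewrite hV. Qed.

Lemma hEsub i : i < k -> forall e, e \in Es i -> e \subset Vs i.
Proof. by move=> ik; apply: (i_esub (inv_i hsp ik)). Qed.

Lemma hst i : i < k -> (s \in Vs i) && (t \in Vs i).
Proof. by move=> ik; rewrite (i_s (inv_i hsp ik)) (i_t (inv_i hsp ik)). Qed.

Lemma UU_cap (X : nat -> {set {set V}}) j : j < k -> (forall i, i < k -> X i \subset Es i) ->
  UU k X :&: Es j = X j.
Proof.
move=> jk XE; apply/setP => f; rewrite inE mem_UU; apply/andP/idP.
  case=> /existsP[i fi] fj.
  case: (eqVneq (nat_of_ord i) j) => [<-//|ne].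
  have := hE (ltn_ord i) jk ne => /setP/(_ f); rewrite !inE fj (subsetP (XE _ (ltn_ord i))) //.
move=> fj; split; first by apply/existsP; exists (Ordinal jk).
exact: (subsetP (XE _ jk)).
Qed.

Lemma transfer (g : {perm V}) r j (X Y : nat -> {set {set V}}) : r < k -> j < k -> img g (Es r) = Es j ->
  (forall i, i < k -> X i \subset Es i) -> (forall i, i < k -> Y i \subset Es i) ->
  img g (UU k X) = UU k Y -> img g (X r) = Y j.
Proof.
move=> rk jk gr XE YE gXY.
by rewrite -(UU_cap rk XE) img_setI gXY gr (UU_cap jk YE).
Qed.

Lemma autor_piece (g : {perm V}) r : r < k -> g \in A ->
  img g (Es r) = Es r -> [set g x | x in Vs r] = Vs r -> g \in autor (Vs r) (Es r) s t.
Proof.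
move=> rk gA gE gV; have [_ g2 g3 _] := autorP _ _ _ _ _ gA.
exact: autor_of.
Qed.

Variable Nt : nat -> {set {set V}}.
Hypothesis hNt : forall i, i < k -> is_near_tree (Vs i) (Es i) (Nt i) s t.

Lemma NtE i : i < k -> Nt i \subset Es i.
Proof. by move=> ik; case: (hNt ik). Qed.

Variable r : nat.
Hypothesis rk : r < k.
Let Ar := autor (Vs r) (Es r) s t.

Definition fam1 (T : {set {set V}}) := fun i => if i == r then T else Nt i.

Lemma fam1E (T : {set {set V}}) : T \subset Es r -> forall i, i < k -> fam1 T i \subset Es i.
Proof. by move=> TE i ik; rewrite /fam1; case: eqP => [->//|_]; apply: NtE. Qed.

Lemma psi1_ST (T : {set {set V}}) : is_spanning_tree (Vs r) (Es r) T -> UU k (fam1 T) \in ST VS ES.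
Proof.
move=> sT; apply/inST.
apply: (union_st hint' hEsub hst rk).
- by apply: fam1E; case: sT.
- by rewrite /fam1 eqxx.
- by move=> i ik ir; rewrite /fam1 (negPf ir); apply: hNt.
Qed.

Lemma Ar_grp : (forall g1 g2, g1 \in Ar -> g2 \in Ar -> (g1 * g2)%g \in Ar) /\
  (forall g, g \in Ar -> g^-1%g \in Ar).
Proof. by split; [apply: autorM|apply: autorV]. Qed.

Lemma st_le : norbits Ar (ST (Vs r) (Es r)) <= norbits A (ST VS ES).
Proof.
have [hM hVV] := Ar_grp.
apply: (orbit_le (psi := fun T => UU k (fam1 T)) (autor1 _ _ _ _) hM hVV).
  by move=> B BS; apply: psi1_ST; apply/inST.
move=> T1 T2 g T1S T2S gA e.
have sT1 : is_spanning_tree (Vs r) (Es r) T1 by apply/inST.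
have sT2 : is_spanning_tree (Vs r) (Es r) T2 by apply/inST.
case: (struct hsp hnp hV hE gA rk) => j jk [gEr gVr].
have T1E : T1 \subset Es r by case: sT1.
have T2E : T2 \subset Es r by case: sT2.
have := transfer rk jk gEr (fam1E T1E) (fam1E T2E) (esym e).
rewrite /fam1 eqxx; case: eqP => [jr|jr] gT.
  subst j; exists g; last by rewrite gT.
  exact: (autor_piece rk gA gEr gVr).
exfalso.
case: (hNt jk) => _ _ _; apply.
rewrite -gT; have [_ g2 g3 _] := autorP _ _ _ _ _ gA.
rewrite -{1}g2 -{1}g3; apply: connect_img.
case: sT1 => _ c _; case/andP: (hst rk) => sr tr; exact: c.
Qed.

Variable j0 : nat.
Hypothesis j0k : j0 < k.
Hypothesis j0r : j0 != r.
Variable T0 : {set {set V}}.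
Hypothesis hT0 : is_spanning_tree (Vs j0) (Es j0) T0.
Variable P : nat -> {perm V}.
Hypothesis hP : forall j, j < k -> or_iso (Vs r) (Es r) (Vs j) (Es j) s t ->
   [/\ [set P j x | x in Vs r] = Vs j, img (P j) (Es r) = Es j, P j s = s & P j t = t].

Definition fam2 (N : {set {set V}}) := fun i => if i == r then N else if i == j0 then T0
  else if `[< or_iso (Vs r) (Es r) (Vs i) (Es i) s t >] then img (P i) N else Nt i.

Lemma fam2E (N : {set {set V}}) : N \subset Es r -> forall i, i < k -> fam2 N i \subset Es i.
Proof.
move=> NE i ik; rewrite /fam2; case: eqP => [->//|_].
case: eqP => [->|_]; first by case: hT0.
case: asboolP => [iso|_]; last exact: NtE.
by case: (hP ik iso) => _ <- _ _; apply: imsetS.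
Qed.

Lemma psi2_ST (N : {set {set V}}) : is_near_tree (Vs r) (Es r) N s t -> UU k (fam2 N) \in ST VS ES.
Proof.
move=> nN; apply/inST.
apply: (union_st hint' hEsub hst j0k).
- by apply: fam2E; case: nN.
- by rewrite /fam2 (negPf j0r) eqxx.
move=> i ik ij0; rewrite /fam2 (negPf ij0); case: eqP => [->//|_].
case: asboolP => [iso|_]; last exact: hNt.
case: (hP ik iso) => h1 h2 h3 h4; exact: nt_transport nN.
Qed.

Lemma nt_le : norbits Ar (NT (Vs r) (Es r) s t) <= norbits A (ST VS ES).
Proof.
have [hM hVV] := Ar_grp.
apply: (orbit_le (psi := fun N => UU k (fam2 N)) (autor1 _ _ _ _) hM hVV).
  by move=> B BS; apply: psi2_ST; apply/inNT.
move=> N1 N2 g N1S N2S gA e.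
have nN1 : is_near_tree (Vs r) (Es r) N1 s t by apply/inNT.
have nN2 : is_near_tree (Vs r) (Es r) N2 s t by apply/inNT.
case: (struct hsp hnp hV hE gA rk) => j jk [gEr gVr].
have N1E : N1 \subset Es r by case: nN1.
have N2E : N2 \subset Es r by case: nN2.
have [_ g2 g3 _] := autorP _ _ _ _ _ gA.
have := transfer rk jk gEr (fam2E N1E) (fam2E N2E) (esym e).
rewrite /fam2 eqxx; case: eqP => [jr|jr] gN.
  subst j; exists g; last by rewrite gN.
  exact: (autor_piece rk gA gEr gVr).
case: eqP gN => [jj0|jj0] gN.
  exfalso; subst j; case: nN1 => _ _ _; apply.
  apply: (connect_img_inv g2 g3); rewrite gN.
  case: hT0 => _ c _; case/andP: (hst j0k) => sr tr; exact: c.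
case: asboolP gN => [iso|niso] gN; last first.
  exfalso; apply: niso; exists g; split => //.
  by move=> x y _ _; apply: perm_inj.
case: (hP jk iso) => p1 p2 p3 p4.
exists (g * (P j)^-1)%g; last by rewrite img_mul gN img_inv.
apply: autor_of.
- have -> : [set (g * (P j)^-1)%g x | x in Vs r] = [set (P j)^-1%g x | x in [set g y | y in Vs r]].
    by rewrite -imset_comp; apply: eq_imset => x; rewrite /= permM.
  by rewrite gVr -p1 imset_perm_inv.
- by rewrite permM g2 -{1}p3 permK.
- by rewrite permM g3 -{1}p4 permK.
by rewrite img_mul gEr -p2 img_inv.
Qed.

End Main.


Section Count.
Variable V : finType.
Variables (k : nat) (Vs : nat -> {set V}) (Es : nat -> {set {set V}}) (s t : V).
Hypothesis hsp : forall i, i < k -> sp (Vs i) (Es i) s t.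
Hypothesis hV : forall i j, i < k -> j < k -> i != j -> Vs i :&: Vs j = [set s; t].
Hypothesis hE : forall i j, i < k -> j < k -> i != j -> Es i :&: Es j = set0.

Let W i := Vs i :\: [set s; t].

Lemma cardVW i : i < k -> #|Vs i| = #|W i| + 2.
Proof.
move=> ik; have I := inv_i hsp ik.
rewrite -(cardsID [set s; t] (Vs i)) addnC; congr (_ + _).
have -> : Vs i :&: [set s; t] = [set s; t].
  apply/setIidPr; apply/subsetP => x; rewrite !inE => /orP[]/eqP->; [exact: i_s I|exact: i_t I].
by rewrite cards2 (i_st I).
Qed.

Lemma sumW m : m <= k -> \sum_(i < m) #|W i| = #|\bigcup_(i < m) W i|.
Proof.
elim: m => [|m IH] mk; first by rewrite !big_ord0 cards0.
rewrite big_ord_recr /= (big_ord_recr m (fun i => W i)) /= IH; last by lia.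
rewrite cardsU; suff -> : (\bigcup_(i < m) W i) :&: W m = set0 by rewrite cards0 subn0.
apply/setP => x; rewrite !inE; apply/negP => /andP[/bigcupP[i _ xi] xm].
move: xi xm; rewrite !inE => /andP[xst xi] /andP[_ xm].
have im : (nat_of_ord i) != m by rewrite neq_ltn ltn_ord.
have := hV (ltn_trans (ltn_ord i) mk) mk im => /setP/(_ x).
by rewrite !inE xi xm (negPf xst).
Qed.

Lemma sumV : \sum_(i < k) #|Vs i| <= 3 * #|UU k Vs| + 2.
Proof.
set S := \sum_(i < k) #|W i|.
have SV : S <= #|UU k Vs|.
  rewrite /S sumW //; apply: subset_leq_card; apply/subsetP => x /bigcupP[i _].
  rewrite inE => /andP[_ xi]; rewrite mem_UU; apply/existsP; exists i => //.
have e1 : \sum_(i < k) #|Vs i| = S + k * 2.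
  rewrite (eq_bigr (fun i : 'I_k => #|W i| + 2)); last by move=> i _; apply: cardVW.
  by rewrite big_split /= sum_nat_const card_ord.
set Z := [set i : 'I_k | W i == set0].
have Z1 : #|Z| <= 1.
  apply/card_le1_eqP => i j; rewrite !inE => /eqP Wi /eqP Wj.
  apply/eqP; apply/negP => /negP ij.
  have stE : forall l : 'I_k, W l = set0 -> [set s; t] \in Es l.
    move=> l Wl; have I := inv_i hsp (ltn_ord l).
    case: (edge_ex hsp (ltn_ord l)) => e eE.
    case: (i_e2 I eE) => x [y [xy ee]]; subst e.
    have sub : forall z, z \in [set x; y] -> (z == s) || (z == t).
      move=> z zin; have zV := subsetP (i_esub I eE) z zin.
      apply/negP => /negP h; have : z \in W l by rewrite inE zV !inE h.
      by rewrite Wl inE.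
    have xin : x \in [set x; y] by rewrite !inE eqxx.
    have yin : y \in [set x; y] by rewrite !inE eqxx orbT.
    case/orP: (sub x xin) => /eqP xe; case/orP: (sub y yin) => /eqP ye; subst x y.
    + by rewrite eqxx in xy.
    + by [].
    + by rewrite set2C.
    + by rewrite eqxx in xy.
  have ij' : (nat_of_ord i) != j by apply: contraNneq ij => h; apply/eqP; apply: val_inj.
  have := hE (ltn_ord i) (ltn_ord j) ij' => /setP/(_ [set s; t]).
  by rewrite !inE (stE i Wi) (stE j Wj).
have kZ : k <= 1 + S.
  have : k = #|Z| + #|~: Z| by rewrite cardsC card_ord.
  move=> ->; apply: leq_add => //.
  rewrite -sum1_card /S; apply: (@leq_trans (\sum_(i in ~: Z) #|W i|)).
    apply: leq_sum => i; rewrite !inE card_gt0 => h; exact: h.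
  by rewrite [X in _ <= X](bigID (fun i => i \in ~: Z)) /= leq_addr.
lia.
Qed.

End Count.


Import GRing.Theory Num.Theory.
Local Open Scope ring_scope.

Lemma final_arith (S n M : nat) : (S <= 3*n+2 -> 1 <= n -> S * (2*M) <= 10*n*M)%N.
Proof. move=> h1 h2; nia. Qed.

Theorem lemma5p15 :
  exists C : rat, 0 < C /\
  forall (V : finType) (s t : V) (k : nat)
         (Vs : nat -> {set V}) (Es : nat -> {set {set V}}) (Rep : {set 'I_k}),
    parallel_decomp (\bigcup_(i < k) Vs i) (\bigcup_(i < k) Es i) s t k Vs Es ->
    (forall i : nat, (i < k)%N -> ~ is_parallel (Vs i) (Es i) s t) ->
    (* Rep picks exactly one representative in each oriented-isomorphism class *)
    (forall j : 'I_k, exists2 r, r \in Rep & or_iso (Vs j) (Es j) (Vs r) (Es r) s t) ->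
    (forall r1 r2, r1 \in Rep -> r2 \in Rep -> r1 != r2 ->
       ~ or_iso (Vs r1) (Es r1) (Vs r2) (Es r2) s t) ->
    ((\sum_(r in Rep)
        #|Vs r| * (norbits (autor (Vs r) (Es r) s t) (ST (Vs r) (Es r))
                 + norbits (autor (Vs r) (Es r) s t) (NT (Vs r) (Es r) s t)))%N%:R
     <= C * (#|\bigcup_(i < k) Vs i|)%:R
          * (norbits (autor (\bigcup_(i < k) Vs i) (\bigcup_(i < k) Es i) s t)
                     (ST (\bigcup_(i < k) Vs i) (\bigcup_(i < k) Es i)))%:R).
Proof.
exists 10%:R; split; first by rewrite ltr0n.
move=> V s t k Vs Es Rep [[hk hsp] hV hE _ _] hnp _ _.
set M := norbits _ _.
set n := #|_|.
rewrite -!natrM ler_nat.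
have hN : forall i, exists N, (i < k)%N -> is_near_tree (Vs i) (Es i) N s t.
  move=> i; case: (ltnP i k) => ik; last by exists set0 => h; exfalso; lia.
  have I := inv_i hsp ik.
  case: (st_exists (i_conn I)) => T sT.
  case: (nt_exists sT (i_s I) (i_t I) (i_st I)) => N nN; by exists N.
case: (boolp.choice hN) => Nt hNt.
have bound : forall r : 'I_k,
    (norbits (autor (Vs r) (Es r) s t) (ST (Vs r) (Es r))
     + norbits (autor (Vs r) (Es r) s t) (NT (Vs r) (Es r) s t) <= 2 * M)%N.
  move=> r; have rk := ltn_ord r.
  rewrite mul2n -addnn; apply: leq_add.
    exact: (st_le hsp hnp hV hE hNt rk).
  set j0 : nat := if nat_of_ord r == 0%N then 1%N else 0%N.
  have j0k : (j0 < k)%N by rewrite /j0; case: eqP => _; lia.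
  have j0r : j0 != r by rewrite /j0; case: ifP => /eqP h; apply/eqP; lia.
  have I0 := inv_i hsp j0k.
  case: (st_exists (i_conn I0)) => T0 hT0.
  have Ir := inv_i hsp rk.
  have hPe : forall j, exists p : {perm V}, (j < k)%N -> or_iso (Vs r) (Es r) (Vs j) (Es j) s t ->
     [/\ [set p x | x in Vs r] = Vs j, img p (Es r) = Es j, p s = s & p t = t].
    move=> j; case: (pselect (or_iso (Vs r) (Es r) (Vs j) (Es j) s t)) => iso; last first.
      by exists 1%g => _ h; case: (iso h).
    case: (iso_perm iso (i_esub Ir) (i_s Ir) (i_t Ir)) => p hp.
    by exists p.
  case: (boolp.choice hPe) => P hP.
  exact: (nt_le hsp hnp hV hE hNt rk j0k j0r hT0 hP).
apply: (@leq_trans (\sum_(r in Rep) #|Vs r| * (2 * M))%N).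
  by apply: leq_sum => r _; apply: leq_mul.
rewrite -big_distrl /=.
have sV := sumV hsp hV hE.
have sub : (\sum_(r in Rep) #|Vs r| <= \sum_(r < k) #|Vs r|)%N.
  rewrite [X in (_ <= X)%N](bigID (fun r => r \in Rep)) /=; exact: leq_addr.
have n1 : (1 <= n)%N.
  rewrite /n card_gt0; apply/set0Pn; exists s.
  have k0 : (0 < k)%N by lia.
  apply/bigcupP; exists (Ordinal k0) => //; exact: (i_s (inv_i hsp k0)).
have : (\sum_(r in Rep) #|Vs r| <= 3 * n + 2)%N.
  apply: leq_trans sub _; exact: sV.
move=> h; exact: final_arith h n1.
Qed.
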